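(* Let $a,b,c,p\in\mathbb{C}$ with $-c\notin\mathbb{N}\cup\{0\}$. Define $(u_n)$ and $(v_n)$ by $u_0=1$, $u_1=\frac{ab}{c}+ip$, $u_2=\frac{iabp}{c}+\frac{a(a+1)b(b+1)}{2c(c+1)}-\frac{p^2}{2}$, $v_0=1$, $v_1=\frac{ab}{c}-ip$, $v_2=-\frac{iabp}{c}+\frac{a(a+1)b(b+1)}{2c(c+1)}-\frac{p^2}{2}$, and for all integers $n\ge2$, \[ u_{n+1}=\frac{(a+n)(b+n)+ip(c+2n)}{(n+1)(c+n)}u_n+\frac{p\left(p-i(a+b+2n-1)\right)}{(n+1)(c+n)}u_{n-1}-\frac{p^2}{(n+1)(c+n)}u_{n-2}, \] \[ v_{n+1}=\frac{(a+n)(b+n)-ip(c+2n)}{(n+1)(c+n)}v_n+\frac{p\left(p+i(a+b+2n-1)\right)}{(n+1)(c+n)}v_{n-1}-\frac{p^2}{(n+1)(c+n)}v_{n-2}. \] Then \[ \sin(pz)F(a,b;c;z)=\sum_{n=0}^\infty\frac{u_n-v_n}{2i}z^n,\qquad |z|<1. \]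
   Context: Here $i$ is the imaginary unit. For $a\in\mathbb{C}$, $(a)_n=a(a+1)\cdots(a+n-1)$ denotes the Pochhammer symbol, with $(a)_0=1$. For $a,b,c\in\mathbb{C}$ with $-c\notin\mathbb{N}\cup\{0\}$, the Gaussian hypergeometric function is $F(a,b;c;z)=\sum_{n=0}^\infty \frac{(a)_n(b)_n}{(c)_n\,n!}z^n$, $|z|<1$. *)

(* Defs.v *)
From HB Require Import structures.
From mathcomp Require Import all_boot all_order all_algebra.
From mathcomp Require Import complex.
From mathcomp Require Import all_classical all_reals all_analysis.
Set Implicit Arguments. Unset Strict Implicit. Unset Printing Implicit Defensive.
Import Order.TTheory GRing.Theory Num.Theory.
Import numFieldNormedType.Exports.
Local Open Scope ring_scope.
Local Open Scope complex_scope.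

(* Equip R[i] with its canonical numField (norm) topology, as mathcomp-analysis
   does generically for numFieldTypes (instances are keyed on the head symbol,
   so they must be copied onto [complex R]). *)
HB.instance Definition _ (R : rcfType) :=
  PseudoPointedMetric.copy (complex R) (complex R)^o.
HB.instance Definition _ (R : rcfType) :=
  NormedModule.copy (complex R) (complex R)^o.

Definition poch {R : realType} (a : R[i]) (n : nat) : R[i] :=
  \prod_(k < n) (a + k%:R).

Definition hyp_coef {R : realType} (a b c : R[i]) (n : nat) : R[i] :=
  poch a n * poch b n / (poch c n * n`!%:R).

Definition hypF {R : realType} (a b c z : R[i]) : R[i] :=
  limn (series (fun n => hyp_coef a b c n * z ^+ n)).

Definition Csin {R : realType} (w : R[i]) : R[i] :=
  limn (series (fun k => (-1) ^+ k * w ^+ (2 * k + 1) / (2 * k + 1)`!%:R)).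

(* Main.v *)
Require Import Defs.
From HB Require Import structures.
From mathcomp Require Import all_boot all_order all_algebra.
From mathcomp Require Import complex.
From mathcomp Require Import all_classical all_reals all_analysis.
Import Order.TTheory GRing.Theory Num.Theory.
Import numFieldNormedType.Exports.
Local Open Scope ring_scope.
Local Open Scope complex_scope.
Local Open Scope classical_set_scope.
From mathcomp Require Import ring lra.

Section Alg.
Variable F : numFieldType.
Definition Eq (q : F) k := q ^+ k / k`!%:R.
Definition conv (q : F) (g : nat -> F) N := \sum_(k < N.+1) Eq q k * g (N - k)%N.

Lemma fact_neq0 k : (k`!%:R : F) != 0.
Proof. by rewrite pnatr_eq0 -lt0n fact_gt0. Qed.

Lemma Eq_succ q k : k.+1%:R * Eq q k.+1 = q * Eq q k.
Proof.
rewrite /Eq factS natrM exprS.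
have h1 : (k%:R + 1 : F) != 0 by rewrite natr1 pnatr_eq0.
have h2 := fact_neq0 k.
field; by rewrite h2 addrC h1.
Qed.

Lemma conv_shift q g N :
  conv q (fun m => m%:R * g m) N.+1 = N.+1%:R * conv q g N.+1 - q * conv q g N.
Proof.
rewrite /conv.
have -> : \sum_(k < N.+2) Eq q k * ((N.+1 - k)%N%:R * g (N.+1 - k)%N)
   = \sum_(k < N.+2) (N.+1%:R * (Eq q k * g (N.+1 - k)%N)
                     - k%:R * Eq q k * g (N.+1 - k)%N).
  apply: eq_bigr => k _; rewrite natrB; last by rewrite -ltnS ltn_ord.
  ring.
rewrite sumrB -mulr_sumr; congr (_ - _).
rewrite big_ord_recl /= mul0r mul0r add0r mulr_sumr.
apply: eq_bigr => k _; rewrite /bump /= add1n subSS Eq_succ; ring.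
Qed.

Lemma convD q g1 g2 N : conv q (fun m => g1 m + g2 m) N = conv q g1 N + conv q g2 N.
Proof. rewrite /conv -big_split /=; apply: eq_bigr => k _; ring. Qed.

Lemma convZ q (l : F) g N : conv q (fun m => l * g m) N = l * conv q g N.
Proof. rewrite /conv mulr_sumr; apply: eq_bigr => k _; ring. Qed.

Lemma conv_ext q g1 g2 N : (forall m, g1 m = g2 m) -> conv q g1 N = conv q g2 N.
Proof. by move=> h; apply: eq_bigr => k _; rewrite h. Qed.

Variables (a b c : F) (f : nat -> F).
Hypothesis hf : forall m, m.+1%:R * (c + m%:R) * f m.+1 = (a + m%:R) * (b + m%:R) * f m.

Lemma conv_rec q m :
  let U := conv q f in
  (m.+3%:R) * (c + m.+2%:R) * U m.+3 =
   ((a + m.+2%:R) * (b + m.+2%:R) + q * (c + 2 * m.+2%:R)) * U m.+2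
   - q * (q + a + b + 2 * m.+2%:R - 1) * U m.+1 + q ^+ 2 * U m.
Proof.
move=> U.
pose X1 (g : nat -> F) := fun m : nat => (m%:R : F) * g m.
have E1 : conv q (fun n => n%:R * (c + n%:R - 1) * f n) m.+3
        = conv q (fun n => (a + n%:R) * (b + n%:R) * f n) m.+2.
  rewrite /conv big_ord_recr /= subnn mul0r mul0r mulr0 addr0.
  apply: eq_bigr => k _.
  have hk : (k <= m.+2)%N by rewrite -ltnS ltn_ord.
  rewrite subSn // -hf; congr (_ * _); rewrite -addn1 natrD; ring.
have L : forall N, conv q (fun n => n%:R * (c + n%:R - 1) * f n) N
    = conv q (X1 (X1 f)) N + (c - 1) * conv q (X1 f) N.
  by move=> N; rewrite -convZ -convD; apply: conv_ext => n; rewrite /X1; ring.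
have Rr : forall N, conv q (fun n => (a + n%:R) * (b + n%:R) * f n) N
    = conv q (X1 (X1 f)) N + (a + b) * conv q (X1 f) N + a * b * U N.
  by move=> N; rewrite /U -!convZ -!convD; apply: conv_ext => n; rewrite /X1; ring.
move: E1; rewrite L Rr /X1.
rewrite (conv_shift q (fun m => m%:R * f m)) (conv_shift q (fun m => m%:R * f m)).
rewrite !conv_shift -/U => E1.
have H : forall x y x' y' : F, x - y = x' - y' -> x' = y' -> x = y.
  by move=> x y x' y' h e; apply/eqP; rewrite -subr_eq0 h e subrr.
apply: (H _ _ _ _ _ E1).
rewrite !mulrS; ring.
Qed.

Lemma rec_solve (q p : F) (w : nat -> F) :
  q ^+ 2 = - p ^+ 2 -> (forall m, c + m%:R != 0) ->
  w 0%N = conv q f 0 -> w 1%N = conv q f 1 -> w 2%N = conv q f 2 ->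
  (forall n, (2 <= n)%N -> w n.+1 =
      ((a + n%:R) * (b + n%:R) + q * (c + 2 * n%:R)) / ((n%:R + 1) * (c + n%:R)) * w n
    + (p * p - q * (a + b + 2 * n%:R - 1)) / ((n%:R + 1) * (c + n%:R)) * w n.-1
    - p ^+ 2 / ((n%:R + 1) * (c + n%:R)) * w n.-2) ->
  forall n, w n = conv q f n.
Proof.
move=> hq hc w0 w1 w2 hrec.
suff H : forall n, [/\ w n = conv q f n, w n.+1 = conv q f n.+1 & w n.+2 = conv q f n.+2].
  by move=> n; case: (H n).
elim=> [|n [h0 h1 h2]]; first by [].
split => //.
rewrite hrec //= h2 h1 h0.
have hD : ((n.+2%:R + 1) * (c + n.+2%:R)) != 0.
  by rewrite mulf_neq0 // natr1 pnatr_eq0.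
apply: (mulfI hD).
rewrite natr1 conv_rec.
have e2 : p ^+ 2 = - q ^+ 2 by rewrite hq opprK.
have e1 : p * p = - (q * q) by rewrite -!expr2.
rewrite e1 e2.
field.
have -> : (2 + n%:R : F) = n.+2%:R by rewrite -natrD add2n.
have -> : (3 + n%:R : F) = n.+3%:R by rewrite -natrD.
by rewrite hc pnatr_eq0.
Qed.
End Alg.


Definition cprod {T : pzRingType} (x y : nat -> T) n := \sum_(k < n.+1) x k * y (n - k)%N.

Lemma cprod_series {T : pzRingType} (x y : nat -> T) N :
  series (cprod x y) N = \sum_(i < N) x i * series y (N - i)%N.
Proof.
elim: N => [|N IH]; first by rewrite /series /= big_geq // big_ord0.
rewrite seriesSr IH /cprod.
have -> : \sum_(i < N.+1) x i * series y (N.+1 - i)%N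
   = \sum_(i < N.+1) x i * series y (N - i)%N + \sum_(i < N.+1) x i * y (N - i)%N.
  rewrite -big_split /=; apply: eq_bigr => i _.
  have hi : (i <= N)%N by rewrite -ltnS ltn_ord.
  by rewrite subSn // seriesSr mulrDr.
rewrite [\sum_(i < N.+1) x i * series y _]big_ord_recr /= subnn.
have -> : series y 0 = 0 by rewrite /series /= big_geq.
by rewrite mulr0 addr0.
Qed.

Section CR.
Variable R : realType.

Lemma series_nondec (x : R^nat) : (forall n, 0 <= x n) -> {homo series x : n m / (n <= m)%N >-> n <= m}.
Proof.
move=> h n m nm; rewrite /series /=.
by apply: (nondecreasing_series (P := xpredT) (m := 0%N)) => // k _ _.
Qed.

Lemma cprod_nn (x y : R^nat) : (forall n, 0 <= x n) -> (forall n, 0 <= y n) ->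
  cvgn (series x) -> cvgn (series y) ->
  series (cprod x y) @ \oo --> limn (series x) * limn (series y).
Proof.
move=> x0 y0 cx cy.
have Xi := @series_nondec x x0; have Yi := @series_nondec y y0.
have XL := nondecreasing_cvgn_le Xi cx; have YL := nondecreasing_cvgn_le Yi cy.
have X0 : forall n, 0 <= series x n by move=> n; rewrite /series /= sumr_ge0.
have Y0 : forall n, 0 <= series y n by move=> n; rewrite /series /= sumr_ge0.
have c0 : forall n, 0 <= cprod x y n by move=> n; rewrite sumr_ge0 // => i _; rewrite mulr_ge0.
have Ci := @series_nondec _ c0.
have Cle : forall N, series (cprod x y) N <= series x N * series y N.
  move=> N; rewrite cprod_series.
  have -> : series x N = \sum_(i < N) x i by rewrite [in LHS]seriesEord.
  rewrite mulr_suml; apply: ler_sum => i _.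
  by rewrite ler_wpM2l // Yi // leq_subr.
have Cge : forall N, series x N * series y N <= series (cprod x y) N.*2.
  move=> N; rewrite cprod_series.
  pose g := fun i => x i * series y (N.*2 - i)%N.
  have g0 : forall i, 0 <= g i by move=> i; rewrite mulr_ge0.
  apply: (@le_trans _ _ (series g N)); last first.
    have -> : \sum_(i < N.*2) x i * series y (N.*2 - i)%N = series g N.*2 by rewrite [in RHS]seriesEord.
    by apply: (@series_nondec g g0); rewrite -addnn leq_addr.
  have -> : series x N = \sum_(i < N) x i by rewrite [in LHS]seriesEord.
  have -> : series g N = \sum_(i < N) g i by rewrite [in LHS]seriesEord.
  rewrite mulr_suml; apply: ler_sum => i _.
  rewrite ler_wpM2l // Yi //.
  by rewrite -addnn -addnBA ?leq_addr // ltnW.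
have Cub : forall N, series (cprod x y) N <= limn (series x) * limn (series y).
  move=> N; apply: (le_trans (Cle N)); apply: ler_pM => //.
have cC : cvgn (series (cprod x y)).
  by apply: nondecreasing_is_cvgn => //; exists (limn (series x) * limn (series y)) => _ [n _ <-].
suff -> : limn (series x) * limn (series y) = limn (series (cprod x y)) by [].
apply/le_anti/andP; split; last first.
  by apply: limr_le => //; apply: nearW.
rewrite -limM //; apply: limr_le; first exact: is_cvgM.
apply: nearW => N /=.
apply: (le_trans (Cge N)); exact: nondecreasing_cvgn_le.
Qed.

Lemma series_ext (x y : R^nat) : (forall n, x n = y n) -> series x = series y.
Proof. by move=> h; apply/funext => n; rewrite /series /=; apply: eq_bigr => i _. Qed.

Lemma cprod_ext (x y x' y' : R^nat) : (forall n, x n = x' n) -> (forall n, y n = y' n) ->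
  cprod x y = cprod x' y'.
Proof. by move=> h h'; apply/funext => n; apply: eq_bigr => i _; rewrite h h'. Qed.

Lemma abs_split (x : R^nat) : cvgn (series (fun n => `|x n|)) ->
  exists xp xm : R^nat, [/\ (forall n, 0 <= xp n), (forall n, 0 <= xm n),
     cvgn (series xp), cvgn (series xm) & (forall n, x n = xp n - xm n)].
Proof.
move=> cx.
exists (fun n => (`|x n| + x n) / 2), (fun n => (`|x n| - x n) / 2).
have h1 : forall n, 0 <= (`|x n| + x n) / 2.
  by move=> n; rewrite divr_ge0 // -lerBlDr sub0r ler_normr lexx orbT.
have h2 : forall n, 0 <= (`|x n| - x n) / 2.
  by move=> n; rewrite divr_ge0 // subr_ge0 ler_norm.
split => //.
- apply: (series_le_cvg h1 (fun n => normr_ge0 (x n))) cx => n.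
  by rewrite ler_pdivrMr // mulr2n mulrDr mulr1 lerD2l ler_norm.
- apply: (series_le_cvg h2 (fun n => normr_ge0 (x n))) cx => n.
  by rewrite ler_pdivrMr // mulr2n mulrDr mulr1 lerD2l ler_normr lexx orbT.
- by move=> n; field.
Qed.

Lemma series_sub (x y : R^nat) n : series (fun k => x k - y k) n = series x n - series y n.
Proof. by rewrite /series /= sumrB. Qed.

Lemma series_subE (x y : R^nat) : series (fun k => x k - y k) = (fun n => series x n - series y n).
Proof. by apply/funext => n; apply: series_sub. Qed.

Lemma cprod_abs (x y : R^nat) : cvgn (series (fun n => `|x n|)) ->
  cvgn (series (fun n => `|y n|)) ->
  exists lx ly : R, [/\ series x @ \oo --> lx, series y @ \oo --> ly &
    series (cprod x y) @ \oo --> lx * ly].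
Proof.
move=> /abs_split [xp [xm [xp0 xm0 cxp cxm ex]]].
move=> /abs_split [yp [ym [yp0 ym0 cyp cym ey]]].
exists (limn (series xp) - limn (series xm)), (limn (series yp) - limn (series ym)).
split.
- rewrite (@series_ext _ _ ex); rewrite series_subE.
  by apply: cvgB.
- rewrite (@series_ext _ _ ey); rewrite series_subE.
  by apply: cvgB.
have -> : cprod x y = fun n => (cprod xp yp n - cprod xp ym n) - (cprod xm yp n - cprod xm ym n).
  apply/funext => n; rewrite /cprod -!sumrB; apply: eq_bigr => i _.
  rewrite ex ey; ring.
rewrite series_subE !series_subE.
have -> : (limn (series xp) - limn (series xm)) * (limn (series yp) - limn (series ym))
  = (limn (series xp) * limn (series yp) - limn (series xp) * limn (series ym))
   - (limn (series xm) * limn (series yp) - limn (series xm) * limn (series ym)) by ring.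
by apply: cvgB; apply: cvgB; apply: cprod_nn.
Qed.
End CR.


Notation Rep := complex.Re.
Notation Imp := complex.Im.
Section C.
Variable R : realType.

Lemma normC_le (w : R[i]) : `|w| <= ((`|Rep w| + `|Imp w|) : R)%:C.
Proof.
rewrite normc_def lecR -[X in _ <= X](@ger0_norm _ (`|Rep w| + `|Imp w|)) ?addr_ge0 // -sqrtr_sqr ler_sqrt ?sqr_ge0 //.
rewrite sqrrD !real_normK ?num_real // -addrA lerD2l lerDr.
by rewrite mulrn_wge0 // mulr_ge0.
Qed.

Lemma C_cvg (s : nat -> R[i]) (x y : R) :
  (fun n => Rep (s n)) @ \oo --> x -> (fun n => Imp (s n)) @ \oo --> y ->
  s @ \oo --> (x +i* y).
Proof.
move=> hx hy; apply/cvgrPdist_lt => e e0.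
have e0' : 0 < Rep e / 2.
  by move: e0; rewrite ltcE => /andP[_ ?]; rewrite divr_gt0.
have eE : e = (Rep e)%:C.
  by move: e0; rewrite ltcE => /andP[/eqP H _]; apply/eqP; rewrite eq_complex /= H !eqxx.
move/cvgrPdist_lt: hx => /(_ _ e0') Hx; move/cvgrPdist_lt: hy => /(_ _ e0') Hy.
apply: filterS2 Hx Hy => n Hxn Hyn.
apply: (le_lt_trans (normC_le _)).
rewrite eE ltcR /=.
have -> : Rep e = Rep e / 2 + Rep e / 2 by rewrite -splitr.
have -> : Rep (x +i* y - s n) = x - Rep (s n) by case: (s n).
have -> : Imp (x +i* y - s n) = y - Imp (s n) by case: (s n).
exact: ltrD.
Qed.
End C.


Section E.
Variable R : realType.
Local Notation nc := (@Normc.normc R).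

Lemma Rep_sum n (F : nat -> R[i]) : Rep (\sum_(i < n) F i) = \sum_(i < n) Rep (F i).
Proof.
elim: n => [|n IH]; first by rewrite !big_ord0.
by rewrite !big_ord_recr /= -IH; case: (\sum_(i < n) F i) => ??; case: (F n).
Qed.

Lemma Imp_sum n (F : nat -> R[i]) : Imp (\sum_(i < n) F i) = \sum_(i < n) Imp (F i).
Proof.
elim: n => [|n IH]; first by rewrite !big_ord0.
by rewrite !big_ord_recr /= -IH; case: (\sum_(i < n) F i) => ??; case: (F n).
Qed.

Lemma Rep_series (s : nat -> R[i]) n : Rep (series s n) = series (fun k => Rep (s k)) n.
Proof. by rewrite [in LHS]seriesEord [in RHS]seriesEord /= Rep_sum. Qed.

Lemma Imp_series (s : nat -> R[i]) n : Imp (series s n) = series (fun k => Imp (s k)) n.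
Proof. by rewrite [in LHS]seriesEord [in RHS]seriesEord /= Imp_sum. Qed.

Lemma Rep_cprod (x y : nat -> R[i]) n :
  Rep (cprod x y n) = cprod (fun k => Rep (x k)) (fun k => Rep (y k)) n
                    - cprod (fun k => Imp (x k)) (fun k => Imp (y k)) n.
Proof.
rewrite /cprod (Rep_sum n.+1 (fun k => x k * y (n - k)%N)) -sumrB; apply: eq_bigr => i _.
by case: (x i) => ??; case: (y _) => ??.
Qed.

Lemma Imp_cprod (x y : nat -> R[i]) n :
  Imp (cprod x y n) = cprod (fun k => Rep (x k)) (fun k => Imp (y k)) n
                    + cprod (fun k => Imp (x k)) (fun k => Rep (y k)) n.
Proof.
rewrite /cprod (Imp_sum n.+1 (fun k => x k * y (n - k)%N)) -big_split; apply: eq_bigr => i _.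
by case: (x i) => ??; case: (y _) => ??.
Qed.

Lemma abs_cvg (x : R^nat) : cvgn (series (fun n => `|x n|)) -> cvgn (series x).
Proof. by move=> h; case: (@cprod_abs _ _ _ h h) => lx [ly [h1 _ _]]; apply/cvg_ex; exists lx. Qed.

Lemma cprod_lim (x y : R^nat) : cvgn (series (fun n => `|x n|)) ->
  cvgn (series (fun n => `|y n|)) ->
  series (cprod x y) @ \oo --> limn (series x) * limn (series y).
Proof.
move=> hx hy; case: (@cprod_abs _ _ _ hx hy) => lx [ly [h1 h2 h3]].
by rewrite (cvg_lim _ h1) // (cvg_lim _ h2).
Qed.

Definition Lim2 (s : nat -> R[i]) : R[i] :=
  limn (series (fun k => Rep (s k))) +i* limn (series (fun k => Imp (s k))).

Lemma C_series (s : nat -> R[i]) : cvgn (series (fun n => `|Rep (s n)|)) ->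
  cvgn (series (fun n => `|Imp (s n)|)) -> series s @ \oo --> Lim2 s.
Proof.
move=> h1 h2; apply: C_cvg.
  rewrite (_ : (fun n => Rep (series s n)) = series (fun k => Rep (s k))).
    exact: abs_cvg.
  by apply/funext => n; rewrite Rep_series.
rewrite (_ : (fun n => Imp (series s n)) = series (fun k => Imp (s k))).
  exact: abs_cvg.
by apply/funext => n; rewrite Imp_series.
Qed.

Lemma C_cprod (x y : nat -> R[i]) :
  cvgn (series (fun n => `|Rep (x n)|)) -> cvgn (series (fun n => `|Imp (x n)|)) ->
  cvgn (series (fun n => `|Rep (y n)|)) -> cvgn (series (fun n => `|Imp (y n)|)) ->
  series (cprod x y) @ \oo --> Lim2 x * Lim2 y.
Proof.
move=> h1 h2 h3 h4.
have -> : Lim2 x * Lim2 y =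
  (limn (series (fun k => Rep (x k))) * limn (series (fun k => Rep (y k)))
   - limn (series (fun k => Imp (x k))) * limn (series (fun k => Imp (y k))))
  +i* (limn (series (fun k => Rep (x k))) * limn (series (fun k => Imp (y k)))
   + limn (series (fun k => Imp (x k))) * limn (series (fun k => Rep (y k)))) by [].
apply: C_cvg.
  rewrite (_ : (fun n => Rep (series (cprod x y) n)) = fun n =>
     series (cprod (fun k => Rep (x k)) (fun k => Rep (y k))) n -
     series (cprod (fun k => Imp (x k)) (fun k => Imp (y k))) n).
    by apply: cvgB; apply: cprod_lim.
  apply/funext => n; rewrite Rep_series -series_sub; congr series.
  by apply/funext => k; rewrite Rep_cprod.
rewrite (_ : (fun n => Imp (series (cprod x y) n)) = fun n =>
   series (cprod (fun k => Rep (x k)) (fun k => Imp (y k))) n +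
   series (cprod (fun k => Imp (x k)) (fun k => Rep (y k))) n).
  by apply: cvgD; apply: cprod_lim.
apply/funext => n; rewrite Imp_series [in RHS]seriesEord [in RHS]seriesEord /= -big_split /=.
rewrite seriesEord /=; apply: eq_bigr => k _; by rewrite Imp_cprod.
Qed.
End E.


Section F.
Variable R : realType.
Local Notation nc := (@Normc.normc R).

Lemma nc_ge0 (w : R[i]) : 0 <= nc w.
Proof. by case: w => ??; rewrite /Normc.normc sqrtr_ge0. Qed.

Lemma Rep_le_nc (w : R[i]) : `|Rep w| <= nc w.
Proof.
case: w => a b; rewrite /Normc.normc /= -sqrtr_sqr ler_sqrt ?addr_ge0 ?sqr_ge0 //.
by rewrite lerDl sqr_ge0.
Qed.

Lemma Imp_le_nc (w : R[i]) : `|Imp w| <= nc w.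
Proof.
case: w => a b; rewrite /Normc.normc /= -sqrtr_sqr ler_sqrt ?addr_ge0 ?sqr_ge0 //.
by rewrite lerDr sqr_ge0.
Qed.

Lemma nc_abs (s : nat -> R[i]) : cvgn (series (fun n => nc (s n))) ->
  cvgn (series (fun n => `|Rep (s n)|)) /\ cvgn (series (fun n => `|Imp (s n)|)).
Proof.
move=> h; split; apply: (series_le_cvg _ _ _ h) => n //; rewrite ?nc_ge0 ?Rep_le_nc ?Imp_le_nc //.
Qed.

Lemma nc_natr n : nc n%:R = n%:R.
Proof. by rewrite -[n%:R]/(1 *+ n) (@normcMn R) Normc.normc1. Qed.

Lemma nc_exp (x : R[i]) k : nc (x ^+ k) = nc x ^+ k.
Proof.
elim: k => [|k IH]; first by rewrite !expr0 Normc.normc1.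
by rewrite !exprS Normc.normcM IH.
Qed.

Lemma nc_N1 : nc (-1) = 1.
Proof. by rewrite (@normcN R) Normc.normc1. Qed.

Lemma nc_norm (z : R[i]) : `|z| = (nc z)%:C.
Proof. by case: z => ??; rewrite normc_def. Qed.

Definition sig (p : R[i]) k : R[i] := if odd k then (-1) ^+ (k./2) * p ^+ k / k`!%:R else 0.
Definition alpha (p z : R[i]) k := sig p k * z ^+ k.

Lemma alpha_bound p z k : nc (alpha p z k) <= exp_coeff (nc p * nc z) k.
Proof.
rewrite /alpha /sig /exp_coeff /=.
have e0 : 0 <= (nc p * nc z) ^+ k / k`!%:R by rewrite divr_ge0 // exprn_ge0 // mulr_ge0 // nc_ge0.
case: (odd k); last by rewrite mul0r Normc.normc0.
rewrite !Normc.normcM Normc.normcV !nc_exp nc_N1 nc_natr expr1n mul1r exprMn.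
by rewrite le_eqVlt; apply/orP; left; apply/eqP; ring.
Qed.

Lemma alpha_cvg p z : cvgn (series (fun k => nc (alpha p z k))).
Proof.
apply: (series_le_cvg _ _ (@alpha_bound p z)); first by move=> n; exact: nc_ge0.
  by move=> n; rewrite /exp_coeff /= divr_ge0 // exprn_ge0 // mulr_ge0 // nc_ge0.
exact: is_cvg_series_exp_coeff.
Qed.

Definition sinterm (w : R[i]) k := (-1) ^+ k * w ^+ (2 * k + 1) / (2 * k + 1)`!%:R.

Lemma alpha_sin p z N : series (alpha p z) N.*2 = series (sinterm (p * z)) N.
Proof.
elim: N => [|N IH]; first by rewrite /series /= !big_geq.
rewrite doubleS !seriesSr IH -addrA; congr (_ + _).
rewrite /alpha /sig /= odd_double /=.
rewrite uphalf_double.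
rewrite mul0r add0r /sinterm -muln2 mulnC addn1 exprMn; ring.
Qed.

Lemma Csin_alpha p z : Csin (p * z) = @Lim2 R (alpha p z).
Proof.
have [h1 h2] := @nc_abs (alpha p z) (alpha_cvg p z).
have H := @C_series R _ h1 h2.
rewrite /Csin -/(sinterm (p * z)).
apply: cvg_lim => //.
rewrite (_ : series (sinterm (p * z)) = (series (alpha p z)) \o (fun N => 2 * N)%N).
  by apply: cvg_comp H; apply: cvg_mulnl.
by apply/funext => N /=; rewrite mul2n alpha_sin.
Qed.
End F.


Section G.
Variable R : realType.
Local Notation nc := (@Normc.normc R).

Lemma ratio_test (w : R^nat) (rho : R) N : (forall n, 0 <= w n) -> 0 <= rho -> rho < 1 ->
  (forall n, (N <= n)%N -> w n.+1 <= rho * w n) -> cvgn (series w).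
Proof.
move=> w0 r0 r1 hr.
have hb : forall k, w (k + N)%N <= geometric (w N) rho k.
  elim=> [|k IH]; first by rewrite /geometric /= add0n expr0 mulr1.
  rewrite addSn /geometric /= exprS.
  apply: (le_trans (hr _ (leq_addl _ _))).
  rewrite mulrCA; apply: ler_wpM2l => //.
have cw' : cvgn (series (fun k => w (k + N)%N)).
  apply: (series_le_cvg _ _ hb) => //.
    by move=> n; rewrite /geometric /= mulr_ge0 // exprn_ge0.
  by apply: is_cvg_geometric_series; rewrite ger0_norm.
apply/cvg_ex; exists (series w N + limn (series (fun k => w (k + N)%N))).
rewrite -(cvg_shiftn N) /=.
have -> : (fun n => series w (n + N)%N) = fun n => series w N + series (fun k => w (k + N)%N) n.
  apply/funext => n; rewrite series_addn; congr (_ + _).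
  by rewrite [in RHS]seriesEnat /= -{1}[N]add0n big_addn addnK.
by apply: cvgD; [exact: cvg_cst | exact: cw'].
Qed.

Variables (a b c : R[i]).
Hypothesis hc : forall m : nat, c != - m%:R.

Lemma cm_neq0 m : c + m%:R != 0.
Proof. by rewrite addr_eq0 hc. Qed.

Lemma poch_S (x : R[i]) m : poch x m.+1 = poch x m * (x + m%:R).
Proof. by rewrite /poch big_ord_recr. Qed.

Lemma poch_neq0 m : poch c m != 0.
Proof.
elim: m => [|m IH]; first by rewrite /poch big_ord0 oner_eq0.
by rewrite poch_S mulf_neq0 // cm_neq0.
Qed.

Lemma hyp_rec m : m.+1%:R * (c + m%:R) * hyp_coef a b c m.+1
   = (a + m%:R) * (b + m%:R) * hyp_coef a b c m.
Proof.
rewrite /hyp_coef !poch_S factS natrM.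
have h1 := cm_neq0 m; have h2 := poch_neq0 m.
have h3 : (m`!%:R : R[i]) != 0 by rewrite pnatr_eq0 -lt0n fact_gt0.
have h4 : (m.+1%:R : R[i]) != 0 by rewrite pnatr_eq0.
by field; rewrite h1 h2 h3 addrC natr1 h4.
Qed.

Lemma hyp_ratio m : hyp_coef a b c m.+1 =
  hyp_coef a b c m * ((a + m%:R) * (b + m%:R) / (m.+1%:R * (c + m%:R))).
Proof.
have h1 := cm_neq0 m.
have h4 : (m.+1%:R : R[i]) != 0 by rewrite pnatr_eq0.
apply: (mulfI (mulf_neq0 h4 h1)); rewrite hyp_rec.
by field; rewrite h1 addrC natr1 h4.
Qed.

Definition beta (z : R[i]) n := hyp_coef a b c n * z ^+ n.

Lemma beta_cvg (z : R[i]) : nc z < 1 -> cvgn (series (fun n => nc (beta z n))).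
Proof.
move=> hz.
set zeta := nc z.
have z0 : 0 <= zeta by exact: nc_ge0.
set D := nc a + nc b + nc c + 1.
have D1 : 1 <= D by rewrite lerDr !addr_ge0 // nc_ge0.
set K := D * (3 + zeta) / (1 - zeta).
pose N := (Num.truncn K).+1.
set rho := 4 * zeta / (1 + zeta) ^+ 2.
have hK : K < N%:R by exact: truncnS_gt.
apply: (@ratio_test _ rho N).
- by move=> n; exact: nc_ge0.
- by rewrite /rho divr_ge0 ?mulr_ge0 ?exprn_ge0 ?addr_ge0.
- rewrite /rho ltr_pdivrMr ?exprn_gt0 //; last by rewrite ltr_pwDl.
  have hh : 0 < (1 - zeta) ^+ 2 by rewrite exprn_gt0 // subr_gt0.
  rewrite mul1r; move: hh; rewrite !expr2; nra.
move=> n hn.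
have nK : K < n%:R by apply: (lt_le_trans hK); rewrite ler_nat.
rewrite /beta hyp_ratio exprS.
rewrite (_ : hyp_coef a b c n * ((a + n%:R) * (b + n%:R) / (n.+1%:R * (c + n%:R))) * (z * z ^+ n)
  = (hyp_coef a b c n * z ^+ n) * ((a + n%:R) * (b + n%:R) / (n.+1%:R * (c + n%:R)) * z)); last by ring.
rewrite Normc.normcM mulrC; apply: ler_wpM2r; first exact: nc_ge0.
rewrite !Normc.normcM Normc.normcV Normc.normcM nc_natr.
set A := nc a; set B := nc b; set C := nc c.
have hA : nc (a + n%:R) <= A + n%:R by rewrite -[X in _ <= _ + X]nc_natr; apply: le_normcD.
have hB : nc (b + n%:R) <= B + n%:R by rewrite -[X in _ <= _ + X]nc_natr; apply: le_normcD.
have hC : n%:R - C <= nc (c + n%:R).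
  have e : nc ((c + n%:R) + (- c)) <= nc (c + n%:R) + nc (- c) by apply: le_normcD.
  rewrite (@normcN R c) (_ : c + n%:R + - c = n%:R) ?nc_natr in e; last by ring.
  rewrite -/C in e; lra.
have A0 : 0 <= A by exact: nc_ge0.
have B0 : 0 <= B by exact: nc_ge0.
have C0 : 0 <= C by exact: nc_ge0.
have zl1 : 0 < 1 - zeta by rewrite subr_gt0.
have nK' : D * (3 + zeta) < n%:R * (1 - zeta).
  by rewrite -ltr_pdivrMr.
have hnD : D < n%:R.
  have h1 : 0 <= (n%:R : R) * zeta by rewrite mulr_ge0.
  have h2 : 0 <= D * zeta by rewrite mulr_ge0 //; lra.
  lra.
have DE : D = A + B + C + 1 by [].
have hC' : 0 < n%:R - C by lra.
have Cpos : 0 < nc (c + n%:R) by lra.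
have n1 : (0 : R) < n.+1%:R by [].
set P := nc (a + n%:R); set Q := nc (b + n%:R); set Zc := nc (c + n%:R).
move: hA hB hC Cpos; rewrite -/P -/Q -/Zc => hA hB hC Cpos.
have P0 : 0 <= P by exact: nc_ge0.
have Q0 : 0 <= Q by exact: nc_ge0.
have nD0 : 0 <= n%:R - D by lra.
have s1 : P * Q <= (n%:R + D) * (n%:R + D) by apply: ler_pM => //; lra.
have s2 : (n%:R - D) * (n%:R - D) <= n.+1%:R * Zc.
  apply: ler_pM => //; last by lra.
  by rewrite -natr1; lra.
have s3 : (1 + zeta) * (n%:R + D) <= 2 * (n%:R - D) by lra.
have key : P * Q * (1 + zeta) ^+ 2 <= 4 * (n.+1%:R * Zc).
  apply: (@le_trans _ _ (((1 + zeta) * (n%:R + D)) ^+ 2)).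
    rewrite exprMn mulrC; apply: ler_wpM2l; first by rewrite exprn_ge0 // addr_ge0.
    by rewrite expr2.
  apply: (@le_trans _ _ ((2 * (n%:R - D)) ^+ 2)).
    rewrite !expr2; apply: ler_pM => //; rewrite mulr_ge0 // ?addr_ge0 //; lra.
  rewrite exprMn (_ : (2 : R) ^+ 2 = 4); last by rewrite expr2; lra.
  by apply: ler_wpM2l => //; rewrite expr2.
have hpos : 0 < n.+1%:R * Zc by rewrite mulr_gt0.
have hpos2 : 0 < (1 + zeta) ^+ 2 by rewrite exprn_gt0 // ltr_pwDl.
rewrite mulrAC ler_pdivrMr // /rho -/zeta [X in _ <= X]mulrAC ler_pdivlMr //.
nra.
Qed.
End G.


Lemma sig_eq (R : realType) (p : R[i]) k :
  (Eq _ ('i * p) k - Eq _ (- ('i * p)) k) / (2 * 'i) = sig R p k.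
Proof.
have hi : ('i : R[i]) != 0 by rewrite eq_complex /= eqxx oner_eq0.
have h2 : (2 : R[i]) != 0 by rewrite pnatr_eq0.
rewrite -[k]odd_double_half; set j := k./2.
have hf : forall n, (n`!%:R : R[i]) != 0 by move=> n; rewrite pnatr_eq0 -lt0n fact_gt0.
case: (odd k) => /=; rewrite /Eq /sig.
  rewrite (_ : (1 + j.*2 = j.*2.+1)%N) //= odd_double /= uphalf_double.
  have e1 : (- ('i * p)) ^+ (j.*2.+1) = - ('i * p) ^+ (j.*2.+1).
    by rewrite -mul2n exprS exprM sqrrN -exprM mulNr -exprS.
  have e2 : ('i * p) ^+ (j.*2.+1) = 'i * (-1) ^+ j * p ^+ (j.*2.+1).
    by rewrite exprMn -mul2n exprS exprM sqr_i.
  rewrite e1 e2; field; by rewrite hf hi.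
- rewrite (_ : (0 + j.*2 = j.*2)%N) // odd_double /=.
  by rewrite -mul2n !exprM sqrrN subrr mul0r.
Qed.

Theorem theorem3p4 (R : realType) (a b c p : R[i]) (u v : nat -> R[i])
  (hc : forall m : nat, c != - m%:R)
  (hu0 : u 0%N = 1)
  (hu1 : u 1%N = a * b / c + 'i * p)
  (hu2 : u 2%N = 'i * a * b * p / c
                 + a * (a + 1) * b * (b + 1) / (2 * c * (c + 1)) - p ^+ 2 / 2)
  (hv0 : v 0%N = 1)
  (hv1 : v 1%N = a * b / c - 'i * p)
  (hv2 : v 2%N = - ('i * a * b * p / c)
                 + a * (a + 1) * b * (b + 1) / (2 * c * (c + 1)) - p ^+ 2 / 2)
  (hun : forall n : nat, (2 <= n)%N ->
     u n.+1 = ((a + n%:R) * (b + n%:R) + 'i * p * (c + 2 * n%:R))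
                / ((n%:R + 1) * (c + n%:R)) * u n
            + p * (p - 'i * (a + b + 2 * n%:R - 1))
                / ((n%:R + 1) * (c + n%:R)) * u n.-1
            - p ^+ 2 / ((n%:R + 1) * (c + n%:R)) * u n.-2)
  (hvn : forall n : nat, (2 <= n)%N ->
     v n.+1 = ((a + n%:R) * (b + n%:R) - 'i * p * (c + 2 * n%:R))
                / ((n%:R + 1) * (c + n%:R)) * v n
            + p * (p + 'i * (a + b + 2 * n%:R - 1))
                / ((n%:R + 1) * (c + n%:R)) * v n.-1
            - p ^+ 2 / ((n%:R + 1) * (c + n%:R)) * v n.-2)
  (z : R[i]) (hz : `|z| < 1) :
  series (fun n => (u n - v n) / (2 * 'i) * z ^+ n) @ \oo
    --> Csin (p * z) * hypF a b c z.
Proof.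
set f := hyp_coef a b c.
have hf := hyp_rec R a b c hc.
have c0 : c != 0 by move: (cm_neq0 R c hc 0); rewrite addr0.
have c1 : c + 1 != 0 by move: (cm_neq0 R c hc 1).
have h2 : (2 : R[i]) != 0 by rewrite pnatr_eq0.
have F0 : (0`! = 1)%N by [].
have F1 : (1`! = 1)%N by [].
have F2 : (2`! = 2)%N by [].
have f0 : f 0%N = 1 by rewrite /f /hyp_coef /poch !big_ord0 /= !mul1r invr1.
have f1 : f 1%N = a * b / c.
  by rewrite /f /hyp_coef /poch !big_ord1 /= !addr0 mulr1.
have f2 : f 2%N = a * (a + 1) * b * (b + 1) / (2 * c * (c + 1)).
  rewrite /f /hyp_coef /poch !big_ord_recr !big_ord0 /= !mul1r !addr0 F2.
  field; by rewrite ?c0 ?c1 ?h2.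
have conv0 : forall q, conv _ q f 0 = 1.
  by move=> q; rewrite /conv big_ord1 /Eq /= subnn f0 F0 expr0 divr1 mulr1.
have conv1 : forall q, conv _ q f 1 = a * b / c + q.
  by move=> q; rewrite /conv !big_ord_recr big_ord0 /= /Eq /= f1 f0 ?F0 ?F1 add0r expr0 expr1 !divr1 mul1r mulr1.
have conv2 : forall q, conv _ q f 2 = a * (a + 1) * b * (b + 1) / (2 * c * (c + 1)) + q * (a * b / c) + q ^+ 2 / 2.
  move=> q; rewrite /conv !big_ord_recr big_ord0 /= /Eq /= f2 f1 f0 ?F0 ?F1 ?F2.
  field; by rewrite ?c0 ?c1 ?h2.
have i2 : ('i : R[i]) ^+ 2 = -1 by rewrite sqr_i.
have Uu : forall n, u n = conv _ ('i * p) f n.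
  apply: (rec_solve _ _ _ _ _ hf _ p).
  - by rewrite exprMn i2 mulN1r.
  - exact: cm_neq0 R c hc.
  - by rewrite hu0 conv0.
  - by rewrite hu1 conv1.
  - rewrite hu2 conv2 exprMn i2; field; by rewrite ?c0 ?c1 ?h2.
  - move=> n hn; rewrite hun //; congr (_ + _ - _); congr (_ / _ * _); ring.
have Vv : forall n, v n = conv _ (- ('i * p)) f n.
  apply: (rec_solve _ _ _ _ _ hf _ p).
  - by rewrite sqrrN exprMn i2 mulN1r.
  - exact: cm_neq0 R c hc.
  - by rewrite hv0 conv0.
  - by rewrite hv1 conv1.
  - rewrite hv2 conv2 sqrrN exprMn i2; field; by rewrite ?c0 ?c1 ?h2.
  - move=> n hn; rewrite hvn //; congr (_ + _ - _); congr (_ / _ * _); ring.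
have E : (fun n => (u n - v n) / (2 * 'i) * z ^+ n) = cprod (alpha R p z) (beta R a b c z).
  apply/funext => n; rewrite Uu Vv /conv /cprod -sumrB mulr_suml mulr_suml.
  apply: eq_bigr => k _.
  have hk : (k <= n)%N by rewrite -ltnS ltn_ord.
  rewrite /alpha /beta -sig_eq -/f.
  have -> : z ^+ n = z ^+ k * z ^+ (n - k) by rewrite -exprD subnKC.
  ring.
rewrite E.
have hz' : Normc.normc z < 1.
  by move: hz; rewrite nc_norm (_ : (1 : R[i]) = (1 : R)%:C) // ltcR.
have [a1 a2] := nc_abs R _ (alpha_cvg R p z).
have [b1 b2] := nc_abs R _ (beta_cvg R a b c hc z hz').
rewrite Csin_alpha.
have -> : hypF a b c z = Lim2 R (beta R a b c z).
  by apply: cvg_lim => //; exact: (C_series R _ b1 b2).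
exact: C_cprod.
Qed.
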